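(* Let $t_1$ and $t_2$ be terms. If the output of the typed unification algorithm applied to $t_1$ and $t_2$ is $\mathit{wrong}$, then there is no substitution $\theta$ such that $\theta(t_1)$ and $\theta(t_2)$ have the same type.
   Context: Terms are built from variables and function symbols: a variable is a term, and if $f$ is an $n$-ary function symbol and $t_1,\dots,t_n$ are terms then $f(t_1,\dots,t_n)$ is a term; a $0$-ary function symbol is a constant. Types: base types int, float, atom, string; compound types $f(\sigma_1,\dots,\sigma_n)$. Every constant has an associated base type, and every function symbol $f$ of arity $n\ge 1$ has type $\sigma_1\times\cdots\times\sigma_n\to f(\sigma_1,\dots,\sigma_n)$, so a ground term $f(t_1,\dots,t_n)$ with $t_i$ of type $\sigma_i$ has type $f(\sigma_1,\dots,\sigma_n)$. A substitution maps variables to terms; $\theta(t)$ denotes its application to $t$. Typed unification algorithm: given terms $t_1,t_2$, start from the pair $(S,F)=(\{t_1=t_2\},\mathit{true})$, where $F$ is a flag, and rewrite it with the following rules until none applies or the algorithm halts with $\mathit{wrong}$ ($c,d$ denote constants, $X$ a variable, $\mathit{Rest}$ the remaining equations): 1. $(\{f(t_1,\dots,t_n)=f(s_1,\dots,s_n)\}\cup \mathit{Rest},F)\to(\{t_1=s_1,\dots,t_n=s_n\}\cup\mathit{Rest},F)$; 2. $(\{f(t_1,\dots,t_n)=g(s_1,\dots,s_m)\}\cup\mathit{Rest},F)\to \mathit{wrong}$ if $f\neq g$ or $n\neq m$; 3. $(\{c=c\}\cup\mathit{Rest},F)\to(\mathit{Rest},F)$; 4. $(\{c=d\}\cup\mathit{Rest},F)\to(\mathit{Rest},\mathit{false})$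 if $c\neq d$ and $c,d$ have the same type; 5. $(\{c=d\}\cup\mathit{Rest},F)\to\mathit{wrong}$ if $c\neq d$ and $c,d$ have different types; 6. $(\{c=f(t_1,\dots,t_n)\}\cup\mathit{Rest},F)\to\mathit{wrong}$; 7. $(\{f(t_1,\dots,t_n)=c\}\cup\mathit{Rest},F)\to\mathit{wrong}$; 8. $(\{X=X\}\cup\mathit{Rest},F)\to(\mathit{Rest},F)$; 9. $(\{t=X\}\cup\mathit{Rest},F)\to(\{X=t\}\cup\mathit{Rest},F)$ if $t$ is not a variable; 10. $(\{X=t\}\cup\mathit{Rest},F)\to(\{X=t\}\cup[X\mapsto t](\mathit{Rest}),F)$ if $X$ does not occur in $t$ and $X$ occurs in $\mathit{Rest}$; 11. $(\{X=t\}\cup\mathit{Rest},F)\to(\mathit{Rest},\mathit{false})$ if $X$ occurs in $t$ and $X\neq t$. When no rule applies, the algorithm outputs $\mathit{false}$ if the flag is $\mathit{false}$, and otherwise outputs the current solved set $S$. *)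

(* Defs.v *)
From Stdlib Require Import List Permutation ClassicalEpsilon.
Import ListNotations.

Inductive basety : Type := TInt | TFloat | TAtom | TString.

Inductive ty (Fn : Type) : Type :=
| Base : basety -> ty Fn
| Comp : Fn -> list (ty Fn) -> ty Fn.
Arguments Base {Fn} _.
Arguments Comp {Fn} _ _.

(* Terms over variables V and function symbols Fn.
   A constant is a 0-ary application  App c [].  *)
Inductive term (V Fn : Type) : Type :=
| Var : V -> term V Fn
| App : Fn -> list (term V Fn) -> term V Fn.
Arguments Var {V Fn} _.
Arguments App {V Fn} _ _.

(* Type of a term; ctype gives the base type of each constant.
   Only ground terms have a type (variables have none). *)
Fixpoint typeof {V Fn : Type} (ctype : Fn -> basety) (t : term V Fn)
  : option (ty Fn) :=
  match t with
  | Var _ => None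
  | App f ts =>
      match ts with
      | [] => Some (Base (ctype f))
      | _ =>
        option_map (Comp f)
          ((fix go (l : list (term V Fn)) : option (list (ty Fn)) :=
              match l with
              | [] => Some []
              | u :: l' =>
                  match typeof ctype u, go l' with
                  | Some a, Some b => Some (a :: b)
                  | _, _ => None
                  end
              end) ts)
      end
  end.

Fixpoint subst {V Fn : Type} (theta : V -> term V Fn) (t : term V Fn)
  : term V Fn :=
  match t with
  | Var x => theta x
  | App f ts => App f (map (subst theta) ts)
  end.

Definition subst1 {V Fn : Type} (X : V) (s : term V Fn) : V -> term V Fn :=
  fun y => if excluded_middle_informative (y = X) then s else Var y.

Fixpoint occurs {V Fn : Type} (X : V) (t : term V Fn) : Prop :=
  match t with
  | Var y => y = X
  | App _ ts =>
      (fix go (l : list (term V Fn)) : Prop :=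
         match l with
         | [] => False
         | u :: l' => occurs X u \/ go l'
         end) ts
  end.

Definition eqn (V Fn : Type) := (term V Fn * term V Fn)%type.

Definition occurs_eqs {V Fn : Type} (X : V) (R : list (eqn V Fn)) : Prop :=
  exists e, In e R /\ (occurs X (fst e) \/ occurs X (snd e)).

Definition subst_eqs {V Fn : Type} (th : V -> term V Fn) (R : list (eqn V Fn))
  : list (eqn V Fn) :=
  map (fun e => (subst th (fst e), subst th (snd e))) R.

Definition is_var {V Fn : Type} (t : term V Fn) : Prop :=
  exists x, t = Var x.

(* The set {e} U Rest is represented by a list
   that is a permutation of e :: Rest (any equation may be selected). *)
Inductive state (V Fn : Type) : Type :=
| Run : list (eqn V Fn) -> bool -> state V Fn
| Wrong : state V Fn.
Arguments Run {V Fn} _ _.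
Arguments Wrong {V Fn}.

Inductive step {V Fn : Type} (ctype : Fn -> basety)
  : state V Fn -> state V Fn -> Prop :=
| rule1 : forall S f ts ss Rest F,
    Permutation S ((App f ts, App f ss) :: Rest) ->
    ts <> [] -> ss <> [] -> length ts = length ss ->
    step ctype (Run S F) (Run (combine ts ss ++ Rest) F)
| rule2 : forall S f g ts ss Rest F,
    Permutation S ((App f ts, App g ss) :: Rest) ->
    ts <> [] -> ss <> [] -> (f <> g \/ length ts <> length ss) ->
    step ctype (Run S F) Wrong
| rule3 : forall S c Rest F,
    Permutation S ((App c [], App c []) :: Rest) ->
    step ctype (Run S F) (Run Rest F)
| rule4 : forall S c d Rest F,
    Permutation S ((App c [], App d []) :: Rest) ->
    c <> d -> ctype c = ctype d ->
    step ctype (Run S F) (Run Rest false)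
| rule5 : forall S c d Rest F,
    Permutation S ((App c [], App d []) :: Rest) ->
    c <> d -> ctype c <> ctype d ->
    step ctype (Run S F) Wrong
| rule6 : forall S c f ts Rest F,
    Permutation S ((App c [], App f ts) :: Rest) -> ts <> [] ->
    step ctype (Run S F) Wrong
| rule7 : forall S c f ts Rest F,
    Permutation S ((App f ts, App c []) :: Rest) -> ts <> [] ->
    step ctype (Run S F) Wrong
| rule8 : forall S X Rest F,
    Permutation S ((Var X, Var X) :: Rest) ->
    step ctype (Run S F) (Run Rest F)
| rule9 : forall S t X Rest F,
    Permutation S ((t, Var X) :: Rest) -> ~ is_var t ->
    step ctype (Run S F) (Run ((Var X, t) :: Rest) F)
| rule10 : forall S X t Rest F,
    Permutation S ((Var X, t) :: Rest) ->
    ~ occurs X t -> occurs_eqs X Rest ->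
    step ctype (Run S F) (Run ((Var X, t) :: subst_eqs (subst1 X t) Rest) F)
| rule11 : forall S X t Rest F,
    Permutation S ((Var X, t) :: Rest) ->
    occurs X t -> t <> Var X ->
    step ctype (Run S F) (Run Rest false).

Inductive steps {V Fn : Type} (ctype : Fn -> basety)
  : state V Fn -> state V Fn -> Prop :=
| steps_refl : forall s, steps ctype s s
| steps_step : forall s1 s2 s3,
    step ctype s1 s2 -> steps ctype s2 s3 -> steps ctype s1 s3.

(* The algorithm, started on (t1 = t2, true), outputs wrong
   (along some run: the rule selection is nondeterministic). *)
Definition outputs_wrong {V Fn : Type} (ctype : Fn -> basety)
  (t1 t2 : term V Fn) : Prop :=
  steps ctype (Run [(t1, t2)] true) Wrong.

(* Main.v *)
Require Import Defs.
From Stdlib Require Import List Permutation ClassicalEpsilon.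
Import ListNotations.

Section Sec.
Context {V Fn : Type} (ctype : Fn -> basety).

Fixpoint term_ind' (P : term V Fn -> Prop) (Hv : forall x, P (Var x))
  (Ha : forall f ts, Forall P ts -> P (App f ts)) (t : term V Fn) : P t :=
  match t with
  | Var x => Hv x
  | App f ts => Ha f ts ((fix go l : Forall P l :=
       match l with [] => Forall_nil _ | u :: l' => Forall_cons _ (term_ind' P Hv Ha u) (go l') end) ts)
  end.

Fixpoint tys (l : list (term V Fn)) : option (list (ty Fn)) :=
  match l with
  | [] => Some []
  | u :: l' => match typeof ctype u, tys l' with
               | Some a, Some b => Some (a :: b) | _, _ => None end
  end.

Lemma typeof_App f ts : typeof ctype (App f ts) =
  match ts with [] => Some (Base (ctype f)) | _ => option_map (Comp f) (tys ts) end.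
Proof. destruct ts; reflexivity. Qed.

Lemma tys_len l L : tys l = Some L -> length L = length l.
Proof.
  revert L; induction l as [|u l IH]; simpl; intros L H.
  - inversion H; auto.
  - destruct (typeof ctype u); [|discriminate]. destruct (tys l) eqn:E; [|discriminate].
    inversion H; subst; simpl; f_equal; auto.
Qed.

Lemma typeof_subst_comp (th s : V -> term V Fn) :
  (forall y, typeof ctype (subst th (s y)) = typeof ctype (th y)) ->
  forall u, typeof ctype (subst th (subst s u)) = typeof ctype (subst th u).
Proof.
  intros H u; induction u as [x|f ts IH] using term_ind'.
  - simpl; apply H.
  - cbn [subst]. rewrite !typeof_App. destruct ts as [|a l]; [reflexivity|].
    simpl map. f_equal.
    assert (tys (map (subst th) (map (subst s) (a :: l))) = tys (map (subst th) (a :: l))) as E.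
    { clear H; induction IH; simpl; auto. rewrite H, IHIH; auto. }
    simpl map in E; rewrite E; reflexivity.
Qed.

Definition good (th : V -> term V Fn) (e : eqn V Fn) : Prop :=
  exists tau, typeof ctype (subst th (fst e)) = Some tau /\
              typeof ctype (subst th (snd e)) = Some tau.

Definition inv (s : state V Fn) : Prop :=
  match s with
  | Run S0 _ => exists th, forall e, In e S0 -> good th e
  | Wrong => False
  end.

Lemma combine_good th ts : forall ss L,
  tys (map (subst th) ts) = Some L -> tys (map (subst th) ss) = Some L ->
  forall e, In e (combine ts ss) -> good th e.
Proof.
  induction ts as [|a ts IH]; intros [|b ss] L H1 H2 e Hin; simpl in *; try contradiction.
  destruct (typeof ctype (subst th a)) as [ta|] eqn:Ea; [|discriminate].
  destruct (tys (map (subst th) ts)) eqn:Eta; [|discriminate].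
  destruct (typeof ctype (subst th b)) as [tb|] eqn:Eb; [|discriminate].
  destruct (tys (map (subst th) ss)) eqn:Ess; [|discriminate].
  inversion H1; subst; inversion H2; subst.
  destruct Hin as [<-|Hin].
  - eexists; simpl; split; eassumption.
  - eapply IH; eauto.
Qed.

Lemma head_good th S x Rest : Permutation S (x :: Rest) ->
  (forall e, In e S -> good th e) -> good th x /\ (forall e, In e Rest -> good th e).
Proof.
  intros P H; split.
  - apply H; apply (Permutation_in _ (Permutation_sym P)); simpl; auto.
  - intros e He; apply H; apply (Permutation_in _ (Permutation_sym P)); simpl; auto.
Qed.

Lemma app_nonnil th f ts tau : ts <> [] ->
  typeof ctype (subst th (App f ts)) = Some tau ->
  exists L, tys (map (subst th) ts) = Some L /\ tau = Comp f L.
Proof.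
  intros Hn H; cbn [subst] in H; rewrite typeof_App in H.
  destruct ts as [|a l]; [congruence|].
  destruct (tys (map (subst th) (a :: l))) eqn:E; simpl in H; [|discriminate].
  inversion H; eauto.
Qed.

Lemma step_inv s s' : step ctype s s' -> inv s -> inv s'.
Proof.
  intros St; destruct St; simpl; intros [th Hth].
  - destruct (head_good _ _ _ _ H Hth) as [[tau [E1 E2]] HR].
    simpl in E1, E2.
    destruct (app_nonnil _ _ _ _ H0 E1) as [L1 [T1 ->]].
    destruct (app_nonnil _ _ _ _ H1 E2) as [L2 [T2 E]].
    inversion E; subst.
    exists th; intros e He; apply in_app_or in He; destruct He as [He|He]; auto.
    exact (combine_good th ts ss L2 T1 T2 e He).
  - destruct (head_good _ _ _ _ H Hth) as [[tau [E1 E2]] HR].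
    simpl in E1, E2.
    destruct (app_nonnil _ _ _ _ H0 E1) as [L1 [T1 ->]].
    destruct (app_nonnil _ _ _ _ H1 E2) as [L2 [T2 E]].
    inversion E; subst.
    destruct H2 as [H2|H2]; [congruence|].
    apply tys_len in T1; apply tys_len in T2; rewrite !length_map in *; congruence.
  - exists th; apply (head_good _ _ _ _ H Hth).
  - exists th; apply (head_good _ _ _ _ H Hth).
  - destruct (head_good _ _ _ _ H Hth) as [[tau [E1 E2]] HR].
    simpl in E1, E2. congruence.
  - destruct (head_good _ _ _ _ H Hth) as [[tau [E1 E2]] HR].
    simpl in E1. destruct (app_nonnil _ _ _ _ H0 E2) as [L [_ E]]. subst. discriminate.
  - destruct (head_good _ _ _ _ H Hth) as [[tau [E1 E2]] HR].
    simpl in E2. destruct (app_nonnil _ _ _ _ H0 E1) as [L [_ E]]. subst. discriminate.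
  - exists th; apply (head_good _ _ _ _ H Hth).
  - destruct (head_good _ _ _ _ H Hth) as [[tau [E1 E2]] HR].
    exists th; intros e [<-|He]; [exists tau; simpl; auto | auto].
  - destruct (head_good _ _ _ _ H Hth) as [[tau [E1 E2]] HR].
    exists th; intros e [<-|He]; [exists tau; simpl; auto|].
    unfold subst_eqs in He. apply in_map_iff in He. destruct He as [[a b] [<- Hab]].
    destruct (HR _ Hab) as [tau' [A B]]. exists tau'. simpl in *.
    assert (Hs : forall y, typeof ctype (subst th (subst1 X t y)) = typeof ctype (th y)).
    { intros y; unfold subst1; destruct (excluded_middle_informative (y = X)) as [->|n].
      - simpl in E1. rewrite E1, E2; reflexivity.
      - reflexivity. }
    rewrite !(typeof_subst_comp _ _ Hs); auto.
  - exists th; apply (head_good _ _ _ _ H Hth).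
Qed.

Lemma steps_inv s s' : steps ctype s s' -> inv s -> inv s'.
Proof. induction 1; eauto using step_inv. Qed.

End Sec.

Theorem theorem2 (V Fn : Type) (ctype : Fn -> basety) (t1 t2 : term V Fn) :
  outputs_wrong ctype t1 t2 ->
  ~ exists (theta : V -> term V Fn) (tau : ty Fn),
      typeof ctype (subst theta t1) = Some tau /\
      typeof ctype (subst theta t2) = Some tau.
Proof.
  intros Hw [th [tau [H1 H2]]].
  apply (steps_inv ctype _ _ Hw). simpl.
  exists th; intros e [<-|[]]; exists tau; simpl; auto.
Qed.
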